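(* For every permutation $w\in S_n$, $$|B(w)|+|C(w)|-1 \le |R(w)| \le |B(w)|\cdot|C(w)|.$$
   Context: $S_n$ is generated by the adjacent transpositions $s_1,\dots,s_{n-1}$. A reduced word for $w$ is a word $i_1\cdots i_k$ with $w=s_{i_1}\cdots s_{i_k}$ and $k$ minimal; $R(w)$ is the set of reduced words. A braid move replaces a factor (consecutive letters) $i(i+1)i$ by $(i+1)i(i+1)$ or vice versa; a commutation move replaces a factor $ij$ with $|i-j|>1$ by $ji$. $B(w)$ (resp. $C(w)$) is the set of equivalence classes of $R(w)$ under sequences of braid moves (resp. commutation moves), called braid classes (resp. commutation classes). *)

(* Defs.v *)
(* Symmetric group S_n = {perm 'I_n}; letter i (1 <= i <= n-1)
   is the ordinal i : 'I_n with 0 < i, and s_i swaps (i-1) and i (0-based). *)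
From Stdlib Require Import ClassicalEpsilon Relations.
From mathcomp Require Import all_boot fingroup perm.

Set Implicit Arguments.
Unset Strict Implicit.
Unset Printing Implicit Defensive.

Local Open Scope group_scope.

Definition pbool (P : Prop) : bool :=
  if excluded_middle_informative P then true else false.

(* adjacent transposition s_i, i in 1..n-1 ; s_0 is unused (identity) *)
Definition adj_tr n (i : 'I_n) : {perm 'I_n} :=
  if 0 < i then tperm (Ordinal (leq_ltn_trans (leq_pred i) (ltn_ord i))) i
  else 1.

Definition valid_word n (t : seq 'I_n) : bool := all (fun i : 'I_n => 0 < i) t.

Definition word_prod n (t : seq 'I_n) : {perm 'I_n} := \prod_(i <- t) adj_tr i.

Definition has_word_of_length n (w : {perm 'I_n}) : pred nat :=
  fun k => [exists t : k.-tuple 'I_n, valid_word t && (word_prod t == w)].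

Definition perm_length n (w : {perm 'I_n}) : nat :=
  match excluded_middle_informative (exists k, has_word_of_length w k) with
  | left h => ex_minn h
  | right _ => 0%N
  end.

Definition reduced_words n (w : {perm 'I_n}) : {set (perm_length w).-tuple 'I_n} :=
  [set t : (perm_length w).-tuple 'I_n | valid_word t && (word_prod t == w)].

Definition braid_move (u v : seq nat) : Prop :=
  exists (a b : seq nat) (i : nat),
    (u = a ++ [:: i; i.+1; i] ++ b /\ v = a ++ [:: i.+1; i; i.+1] ++ b) \/
    (u = a ++ [:: i.+1; i; i.+1] ++ b /\ v = a ++ [:: i; i.+1; i] ++ b).

Definition comm_move (u v : seq nat) : Prop :=
  exists (a b : seq nat) (i j : nat),
    (i.+1 < j \/ j.+1 < i) /\ u = a ++ [:: i; j] ++ b /\ v = a ++ [:: j; i] ++ b.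

Definition move_classes (mv : seq nat -> seq nat -> Prop) n (w : {perm 'I_n})
  : {set {set (perm_length w).-tuple 'I_n}} :=
  [set [set u in reduced_words w |
          pbool (clos_refl_sym_trans _ mv (map val t) (map val u))]
   | t : (perm_length w).-tuple 'I_n in reduced_words w].

Definition braid_classes n (w : {perm 'I_n}) := move_classes braid_move w.
Definition comm_classes n (w : {perm 'I_n}) := move_classes comm_move w.

(* Main.v *)
Require Import Defs.
From Stdlib Require Import ClassicalEpsilon Relations.
From mathcomp Require Import all_boot fingroup perm.
From mathcomp Require Import zify.
Set Implicit Arguments. Unset Strict Implicit. Unset Printing Implicit Defensive.

Definition sw (a x : nat) : nat := if x == a.-1 then a else if x == a then a.-1 else x.

Ltac swcase := repeat match goal with
  |- context [if ?x == ?y then _ else _] =>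
     lazymatch x with context [if _ then _ else _] => fail | _ =>
       case: (@eqP _ x y) => ? end end.
Ltac swt := rewrite /sw; swcase; lia.

Lemma sw_braid a x : 0 < a -> sw a (sw a.+1 (sw a x)) = sw a.+1 (sw a (sw a.+1 x)).
Proof. move=> ha. swt. Qed.
Lemma sw_comm a b x : a.+1 < b -> sw a (sw b x) = sw b (sw a x).
Proof. move=> h. swt. Qed.
Lemma sw_mono a u v : 0 < a -> u <> v -> ~ (u = a.-1 /\ v = a) -> ~ (u = a /\ v = a.-1) ->
  (sw a u < sw a v) = (u < v).
Proof. move=> ha h1 h2 h3. rewrite /sw; swcase; apply/idP/idP; lia. Qed.

Lemma adj_trE n (i : 'I_n) (x : 'I_n) : val (adj_tr i x) = sw i x.
Proof.
rewrite /adj_tr; case: ifP => hi; last first.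
  by rewrite perm1 /sw; move: hi; case: (val i) => //= _; case: eqP.
case: tpermP => [->|->|]; rewrite /=.
- swt.
- swt.
- move=> h1 h2. rewrite /sw; case: eqP => [h|_]; first by case: h1; apply: val_inj.
  by case: eqP => [h|_] //; case: h2; apply: val_inj.
Qed.

Section S.
Variable n : nat.
Local Open Scope group_scope.

Definition sN (a : nat) : {perm 'I_n} :=
  if (insub a : option 'I_n) is Some o then adj_tr o else 1.
Definition app (p : {perm 'I_n}) (x : nat) : nat :=
  if (insub x : option 'I_n) is Some o then val (p o) else x.
Definition qv (p : {perm 'I_n}) := app p^-1.

Lemma appE p (o : 'I_n) : app p o = p o.
Proof. by rewrite /app valK. Qed.
Lemma app_out p x : n <= x -> app p x = x.
Proof. by move=> h; rewrite /app insubF // ltnNge h. Qed.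
Lemma appM p q x : app (p * q) x = app q (app p x).
Proof.
case: (ltnP x n) => hx; last by rewrite !app_out.
have -> : x = val (Ordinal hx) by [].
by rewrite !appE permM.
Qed.
Lemma app1 x : app 1 x = x.
Proof. case: (ltnP x n) => hx; last by rewrite !app_out.
have -> : x = val (Ordinal hx) by []. by rewrite appE perm1. Qed.
Lemma app_lt p x : x < n -> app p x < n.
Proof. move=> hx; have -> : x = val (Ordinal hx) by []. by rewrite appE. Qed.
Lemma appK p x : qv p (app p x) = x.
Proof. by rewrite /qv -appM mulgV app1. Qed.
Lemma qvK p x : app p (qv p x) = x.
Proof. by rewrite /qv -appM mulVg app1. Qed.
Lemma app_inj p x y : app p x = app p y -> x = y.
Proof. by move=> h; rewrite -(appK p x) h appK. Qed.
Lemma qv_inj p x y : qv p x = qv p y -> x = y.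
Proof. exact: app_inj. Qed.
Lemma qv_lt p x : x < n -> qv p x < n.
Proof. exact: app_lt. Qed.

Lemma sN_ord a (ha : a < n) : sN a = adj_tr (Ordinal ha).
Proof. by rewrite /sN insubT. Qed.
Lemma app_sN a x : a < n -> app (sN a) x = sw a x.
Proof.
move=> ha; rewrite (sN_ord ha).
case: (ltnP x n) => hx; last by rewrite app_out //; swt.
have -> : x = val (Ordinal hx) by []. by rewrite appE adj_trE.
Qed.
Lemma sNV a : (sN a)^-1 = sN a.
Proof. rewrite /sN; case: insub => [o|]; last by rewrite invg1.
rewrite /adj_tr; case: ifP => _; [exact: tpermV | exact: invg1]. Qed.
Lemma sNK a : sN a * sN a = 1.
Proof. by rewrite -{2}sNV mulgV. Qed.
Lemma qv_sN p a x : a < n -> qv (p * sN a) x = qv p (sw a x).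
Proof. by move=> ha; rewrite /qv invMg sNV appM app_sN. Qed.

Lemma perm_ext (p q : {perm 'I_n}) : (forall x, x < n -> app p x = app q x) -> p = q.
Proof. move=> h; apply/permP => o; have := h o (ltn_ord o); rewrite !appE; exact: val_inj. Qed.

Lemma sN_comm a b : a < n -> b < n -> a.+1 < b -> sN a * sN b = sN b * sN a.
Proof. move=> ha hb hab; apply: perm_ext => x _; rewrite !appM !app_sN //. swt. Qed.
Lemma sN_braid a : 0 < a -> a.+1 < n ->
  sN a * sN a.+1 * sN a = sN a.+1 * sN a * sN a.+1.
Proof. move=> h0 ha; apply: perm_ext => x _; rewrite !appM !app_sN //; try lia. swt. Qed.

Definition isinv p x y := [&& x < y, y < n & app p y < app p x].
Definition L p := #|[set o : 'I_n * 'I_n | isinv p o.1 o.2]|.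

Lemma isinv_up p a x y : 0 < a < n -> qv p a.-1 < qv p a ->
  isinv (p * sN a) x y = isinv p x y || ((x == qv p a.-1) && (y == qv p a)).
Proof.
move=> /andP[a0 an] hAB; rewrite /isinv !appM !app_sN //.
have hA : app p (qv p a.-1) = a.-1 by rewrite qvK.
have hB : app p (qv p a) = a by rewrite qvK.
have Bn : qv p a < n by exact: qv_lt.
case: (x =P qv p a.-1) => hx; case: (y =P qv p a) => hy /=.
- subst; rewrite hA hB; swt.
all: case: (ltnP x y) => //= hxy; case: (ltnP y n) => //= hyn.
all: have ne : app p y <> app p x by move/app_inj; lia.
all: have c3 : ~ (app p y = a.-1 /\ app p x = a) by
  case=> /(congr1 (qv p)) + /(congr1 (qv p)); rewrite !appK => ??; lia.
all: have c4 : ~ (app p y = a /\ app p x = a.-1) by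
  case=> /(congr1 (qv p)) + /(congr1 (qv p)); rewrite !appK => e1 e2;
  first [apply: hx | apply: hy]; by rewrite ?e1 ?e2.
all: by rewrite sw_mono // orbF.
Qed.

Lemma L_up p a : 0 < a < n -> qv p a.-1 < qv p a -> L (p * sN a) = (L p).+1.
Proof.
move=> /andP[a0 an] hAB.
have a1n : a.-1 < n by lia.
set oA := p^-1 (Ordinal a1n). set oB := p^-1 (Ordinal an).
have eA : nat_of_ord oA = qv p a.-1 by rewrite /oA -appE.
have eB : nat_of_ord oB = qv p a by rewrite /oB -appE.
rewrite /L (_ : [set o : ('I_n * 'I_n)%type | isinv (p * sN a) o.1 o.2] = (oA, oB) |: [set o : ('I_n * 'I_n)%type | isinv p o.1 o.2]).
  rewrite cardsU1 inE /= /isinv eA eB !qvK. have -> : (a < a.-1) = false by apply/negbTE; rewrite -leqNgt leq_pred. by rewrite !andbF.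
apply/setP => -[x y]; rewrite !inE /= isinv_up ?a0 // xpair_eqE -eA -eB orbC.
done.
Qed.

Lemma L_down p a : 0 < a < n -> qv p a < qv p a.-1 -> (L (p * sN a)).+1 = L p.
Proof.
move=> ha h; have an : a < n by case/andP: ha.
have := @L_up (p * sN a) a ha; rewrite !qv_sN // -mulgA sNK mulg1 => <- //.
rewrite /sw eqxx; case: eqP => [|_]; last by rewrite eqxx.
lia.
Qed.

Lemma qv_neq p a : 0 < a -> qv p a.-1 <> qv p a.
Proof. by move=> a0 /qv_inj; lia. Qed.

Lemma L_step p a : 0 < a < n -> L (p * sN a) <= (L p).+1 /\ L p <= (L (p * sN a)).+1.
Proof.
move=> ha; have a0 : 0 < a by case/andP: ha.
case: (ltngtP (qv p a.-1) (qv p a)) => h.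
- rewrite L_up //; lia.
- have := L_down ha h; lia.
- by case: (qv_neq a0 h).
Qed.

Lemma L1 : L 1 = 0.
Proof. apply/eqP; rewrite cards_eq0; apply/eqP/setP => o; rewrite !inE /isinv !app1.
apply/negbTE; apply/negP => /and3P[]; lia. Qed.

Definition prodN (s : seq nat) : {perm 'I_n} := \prod_(i <- s) sN i.
Definition validN (s : seq nat) := all (fun i => 0 < i < n) s.

Lemma prodN_cons a s : prodN (a :: s) = sN a * prodN s.
Proof. by rewrite /prodN big_cons. Qed.
Lemma prodN_rcons s a : prodN (rcons s a) = prodN s * sN a.
Proof. by rewrite /prodN big_rcons. Qed.
Lemma prodN_cat s t : prodN (s ++ t) = prodN s * prodN t.
Proof. by rewrite /prodN big_cat. Qed.
Lemma prodN_nil : prodN [::] = 1.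
Proof. by rewrite /prodN big_nil. Qed.

Lemma L_word p s : validN s -> L (p * prodN s) <= L p + size s.
Proof.
elim: s p => [|a s IH] p /=; first by rewrite prodN_nil mulg1 addn0.
case/andP=> ha hs; rewrite prodN_cons mulgA.
apply: leq_trans (IH (p * sN a) hs) _. have [h1 _] := L_step p ha. rewrite /=; lia.
Qed.

Lemma exists_desc p : p <> 1 -> exists a, 0 < a < n /\ qv p a < qv p a.-1.
Proof.
move=> hp.
case: (boolP [exists a : 'I_n, (0 < a) && (qv p a < qv p (val a).-1)]).
  by case/existsP => a /andP[h1 h2]; exists a; rewrite h1 ltn_ord.
move/existsPn => hno; exfalso; apply: hp.
have inc : forall a, 0 < a < n -> qv p a.-1 < qv p a.
  move=> a /andP[a0 an]; have := hno (Ordinal an); rewrite /= a0 /= -leqNgt leq_eqVlt.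
  case/orP => // /eqP h; by case: (qv_neq a0 h).
have ge : forall x, x < n -> x <= qv p x.
  elim=> // x IH hx; have := inc x.+1; rewrite /=; have := IH (ltnW hx); lia.
have le : forall j x, x < n -> n - x = j.+1 -> qv p x <= x.
  elim=> [|j IH] x hx hj; first by have := qv_lt p hx; lia.
  have := IH x.+1; have := inc x.+1; rewrite /=; lia.
have h1 : p^-1 = 1.
  apply: perm_ext => x hx; rewrite app1; have := ge x hx; have := le (n - x).-1 x hx.
  rewrite /qv; lia.
by rewrite -(invgK p) h1 invg1.
Qed.

Lemma exists_word p : exists s, [/\ validN s, size s = L p & prodN s = p].
Proof.
have [k] := ubnP (L p); elim: k p => // k IH p hk.
case: (p =P 1) => [->|hp].
  by exists [::]; rewrite L1 prodN_nil.
have [a [ha hd]] := exists_desc hp.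
have hL := L_down ha hd.
have [s [hs1 hs2 hs3]] := IH (p * sN a) ltac:(lia).
exists (rcons s a); split.
- by rewrite /validN all_rcons ha.
- by rewrite size_rcons hs2.
- by rewrite prodN_rcons hs3 -mulgA sNK mulg1.
Qed.

Fixpoint invs (p : {perm 'I_n}) (u : seq nat) : seq (nat * nat) :=
  if u is a :: u' then (qv p a.-1, qv p a) :: invs (p * sN a) u' else [::].

Lemma invs_cat p u v : invs p (u ++ v) = invs p u ++ invs (p * prodN u) v.
Proof.
elim: u p => [|a u IH] p /=; first by rewrite prodN_nil mulg1.
by rewrite IH prodN_cons mulgA.
Qed.

Lemma size_invs p u : size (invs p u) = size u.
Proof. by elim: u p => //= a u IH p; rewrite IH. Qed.

Lemma invs_uniq p u : validN u -> L (p * prodN u) = L p + size u ->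
  uniq (invs p u) && all (fun xy => ~~ isinv p xy.1 xy.2) (invs p u).
Proof.
elim: u p => [|a u IH] p //=.
case/andP=> ha hu; have e : p * prodN (a :: u) = p * sN a * prodN u by rewrite prodN_cons mulgA.
rewrite e => hL.
have h1 := L_word (p * sN a) hu.
have [h2 _] := L_step p ha.
have e1 : L (p * sN a) = (L p).+1 by lia.
have e2 : L (p * sN a * prodN u) = L (p * sN a) + size u by lia.
have a0 : 0 < a by case/andP: ha.
have up : qv p a.-1 < qv p a.
  case: (ltngtP (qv p a.-1) (qv p a)) => // h.
  - have := L_down ha h; lia.
  - by case: (qv_neq a0 h).
case/andP: (IH _ hu e2) => hU hA.
have hin : isinv (p * sN a) (qv p a.-1) (qv p a) by rewrite isinv_up // !eqxx orbT.
apply/andP; split.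
- rewrite hU andbT; apply/negP => hm.
  by move/allP: hA => /(_ _ hm) /=; rewrite hin.
- apply/andP; split.
  + rewrite /isinv !qvK; apply/negP => /and3P[_ _]; lia.
  + apply/allP => xy hm; move/allP: hA => /(_ _ hm).
    by rewrite isinv_up //; apply: contra => ->.
Qed.

Definition meet (al be : nat * nat) :=
  [|| al.1 == be.1, al.1 == be.2, al.2 == be.1 | al.2 == be.2].
Definition before (s : seq (nat * nat)) al be := index al s < index be s.
Definition PR (P : nat * nat -> nat * nat -> Prop) (s t : seq (nat * nat)) :=
  perm_eq s t /\ forall al be, P al be -> before s al be = before t al be.

Lemma PR_refl P s : PR P s s.
Proof. by split. Qed.
Lemma PR_trans P s t r : PR P s t -> PR P t r -> PR P s r.
Proof. case=> h1 h2 [h3 h4]; split; first exact: perm_trans h1 h3.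
by move=> al be h; rewrite h2 // h4. Qed.
Lemma PR_sym P s t : PR P s t -> PR P t s.
Proof. by case=> h1 h2; split; [rewrite perm_sym | move=> al be h; rewrite h2]. Qed.

Lemma before_window (X W W' Y : seq (nat * nat)) al be :
  perm_eq W W' -> ~~ ((al \in W) && (be \in W)) ->
  before (X ++ W ++ Y) al be = before (X ++ W' ++ Y) al be.
Proof.
move=> hW; have hm := perm_mem hW; have hs := perm_size hW.
rewrite /before !index_cat !hm hs => hn.
have f1 := index_mem al W; have f2 := index_mem al W'.
have f3 := index_mem be W; have f4 := index_mem be W'.
have f5 := index_mem al X; have f6 := index_mem be X.
rewrite !hm hs in f1 f3.
move: hn f1 f2 f3 f4 f5 f6.
case: (al \in X); case: (be \in X); case: (al \in W'); case: (be \in W') => //= _ f1 f2 f3 f4 f5 f6;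
  apply/idP/idP; lia.
Qed.

Lemma eq_from_before (s t : seq (nat * nat)) : uniq s -> uniq t -> s =i t ->
  (forall al be, before s al be = before t al be) -> s = t.
Proof.
elim: s t => [|x s IH] [|y t] //=.
- by move=> _ _ /(_ y); rewrite inE eqxx.
- by move=> _ _ /(_ x); rewrite inE eqxx.
case/andP=> xs us /andP[yt ut] hm hb.
have exy : x = y.
  case: (x =P y) => // nxy; exfalso.
  have := hb y x; rewrite /before /= !eqxx.
  case: (x =P y) => [e|_]; first by case: nxy. by case: (y =P x) => [e|_]; first by case: nxy.
subst y.
have hs : size s = size t.
  apply: perm_size; apply: uniq_perm => // z; have := hm z; rewrite !inE.
  case: (z =P x) => [->|_] //=. by rewrite (negbTE xs) (negbTE yt).
congr (_ :: _); apply: IH => //.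
- move=> z; have := hm z; rewrite !inE.
  case: (z =P x) => [->|_] //=. by rewrite (negbTE xs) (negbTE yt).
- move=> al be; have := hb al be; rewrite /before /=.
  case: (x =P al) => [<-|nal]; case: (x =P be) => [<-|nbe] //=.
  + by rewrite !ltnn.
  + by move=> _; rewrite (memNindex xs) (memNindex yt) !ltnNge !index_size.
  + have nal' : (al == x) = false by apply/eqP => e; apply: nal; rewrite e.
    move=> _; rewrite (memNindex xs) (memNindex yt) !index_mem.
    by move: (hm al); rewrite !inE nal'.
Qed.
End S.



Lemma perm3 (T : eqType) (a b c : T) : perm_eq [:: a; b; c] [:: c; b; a].
Proof. by rewrite perm_sym -[X in perm_eq X _]/(rev [:: a; b; c]) perm_rev. Qed.
Lemma perm2 (T : eqType) (a b : T) : perm_eq [:: a; b] [:: b; a].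
Proof. by rewrite perm_sym -[X in perm_eq X _]/(rev [:: a; b]) perm_rev. Qed.

Section M.
Variable n : nat.
Local Open Scope group_scope.
Local Notation sN := (sN n).
Local Notation prodN := (prodN n).
Local Notation validN := (validN n).

Lemma prodN3 a b c : prodN [:: a; b; c] = sN a * sN b * sN c.
Proof. by rewrite !prodN_cons prodN_nil mulg1 mulgA. Qed.
Lemma prodN2 a b : prodN [:: a; b] = sN a * sN b.
Proof. by rewrite !prodN_cons prodN_nil mulg1. Qed.

Lemma invs3 (p : {perm 'I_n}) a b c : invs p [:: a; b; c] =
  [:: (qv p a.-1, qv p a); (qv (p * sN a) b.-1, qv (p * sN a) b);
      (qv (p * sN a * sN b) c.-1, qv (p * sN a * sN b) c)].
Proof. by []. Qed.
Lemma invs2 (p : {perm 'I_n}) a b : invs p [:: a; b] =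
  [:: (qv p a.-1, qv p a); (qv (p * sN a) b.-1, qv (p * sN a) b)].
Proof. by []. Qed.

Definition nm (al be : nat * nat) : Prop := ~~ meet al be.
Definition mt (al be : nat * nat) : Prop := meet al be.

Lemma validN_mem s x : validN s -> x \in s -> 0 < x < n.
Proof. by move/allP; apply. Qed.

Lemma braid_core X Y i : validN (X ++ [:: i; i.+1; i] ++ Y) ->
  [/\ validN (X ++ [:: i.+1; i; i.+1] ++ Y),
      prodN (X ++ [:: i; i.+1; i] ++ Y) = prodN (X ++ [:: i.+1; i; i.+1] ++ Y),
      size (X ++ [:: i; i.+1; i] ++ Y) = size (X ++ [:: i.+1; i; i.+1] ++ Y) &
      forall p : {perm 'I_n}, PR nm (invs p (X ++ [:: i; i.+1; i] ++ Y)) (invs p (X ++ [:: i.+1; i; i.+1] ++ Y))].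
Proof.
move=> hv.
have := validN_mem hv (_ : i.+1 \in _); rewrite !mem_cat !inE eqxx !orbT => /(_ isT) /andP[_ i2].
have := validN_mem hv (_ : i \in _); rewrite !mem_cat !inE eqxx !orbT => /(_ isT) /andP[i0 i1].
have eP : prodN [:: i; i.+1; i] = prodN [:: i.+1; i; i.+1] by rewrite !prodN3 sN_braid.
split.
- move: hv; rewrite /validN !all_cat => /and3P[-> _ ->]; rewrite /= !andbT.
  by repeat (apply/andP; split); try lia.
- by rewrite !prodN_cat eP.
- by rewrite !size_cat.
move=> p; rewrite !invs_cat eP.
set p' := p * prodN X.
rewrite invs3 invs3 !qv_sN //.
have e1 : sw i i = i.-1 by swt.
have e2 : sw i i.+1 = i.+1 by swt.
have e3 : sw i.+1 i.-1 = i.-1 by swt.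
have e4 : sw i i.-1 = i by swt.
have e5 : sw i.+1 i = i.+1 by swt.
have e6 : sw i.+1 i.+1 = i by swt.
do 3 rewrite ?e1 ?e2 ?e3 ?e4 ?e5 ?e6.
split.
  by rewrite perm_cat2l perm_cat2r perm3.
move=> al be hn; apply: before_window; first exact: perm3.
apply/negP => /andP[]; rewrite !inE.
by case/or3P => /eqP ea; case/or3P => /eqP eb; subst al be; move: hn; rewrite /nm /meet /= !eqxx ?orbT.
Qed.

Lemma PR_sym' P s t : PR P s t -> PR P t s.
Proof. exact: PR_sym. Qed.

Lemma braid_step u v : braid_move u v -> validN u ->
  [/\ validN v, prodN u = prodN v, size u = size v & forall p : {perm 'I_n}, PR nm (invs p u) (invs p v)].
Proof.
case=> X [Y [i [[-> ->]|[-> ->]]]]; first exact: braid_core.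
move=> hv.
have hv' : validN (X ++ [:: i; i.+1; i] ++ Y).
  have := validN_mem hv (_ : i.+1 \in _); rewrite !mem_cat !inE eqxx !orbT => /(_ isT) /andP[_ i2].
  have := validN_mem hv (_ : i \in _); rewrite !mem_cat !inE eqxx !orbT => /(_ isT) /andP[i0 i1].
  move: hv; rewrite /validN !all_cat => /and3P[-> _ ->]; rewrite /= !andbT.
  by repeat (apply/andP; split); try lia.
have [h1 h2 h3 h4] := braid_core hv'.
by split => // p; apply: PR_sym.
Qed.

Lemma comm_core X Y i j : (i.+1 < j) \/ (j.+1 < i) -> validN (X ++ [:: i; j] ++ Y) ->
  [/\ validN (X ++ [:: j; i] ++ Y),
      prodN (X ++ [:: i; j] ++ Y) = prodN (X ++ [:: j; i] ++ Y),
      size (X ++ [:: i; j] ++ Y) = size (X ++ [:: j; i] ++ Y) &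
      forall p : {perm 'I_n}, PR mt (invs p (X ++ [:: i; j] ++ Y)) (invs p (X ++ [:: j; i] ++ Y))].
Proof.
move=> hij hv.
have := validN_mem hv (_ : i \in _); rewrite !mem_cat !inE eqxx !orbT => /(_ isT) /andP[i0 i1].
have := validN_mem hv (_ : j \in _); rewrite !mem_cat !inE eqxx !orbT => /(_ isT) /andP[j0 j1].
have eP : prodN [:: i; j] = prodN [:: j; i].
  rewrite !prodN2; case: hij => h; [exact: sN_comm | exact/esym/sN_comm].
split.
- move: hv; rewrite /validN !all_cat => /and3P[-> _ ->]; rewrite /= !andbT.
  by repeat (apply/andP; split); try lia.
- by rewrite !prodN_cat eP.
- by rewrite !size_cat.
move=> p; rewrite !invs_cat eP.
set p' := p * prodN X.
rewrite invs2 invs2 !qv_sN //.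
have e1 : sw i j.-1 = j.-1 by swt.
have e2 : sw i j = j by swt.
have e3 : sw j i.-1 = i.-1 by swt.
have e4 : sw j i = i by swt.
rewrite e1 e2 e3 e4.
split.
  by rewrite perm_cat2l perm_cat2r perm2.
move=> al be hm.
case: (al =P be) => [->|ne]; first by rewrite /before !ltnn.
apply: before_window; first exact: perm2.
have nm1 : ~~ meet (qv p' i.-1, qv p' i) (qv p' j.-1, qv p' j).
  rewrite /meet /= !(inj_eq (@qv_inj n p')); apply/negP; case/or4P => /eqP; lia.
have nm2 : ~~ meet (qv p' j.-1, qv p' j) (qv p' i.-1, qv p' i).
  rewrite /meet /= !(inj_eq (@qv_inj n p')); apply/negP; case/or4P => /eqP; lia.
apply/negP => /andP[]; rewrite !inE.
case/orP => /eqP ea /orP[]/eqP eb; subst al be => //.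
- by move: hm; rewrite /mt (negbTE nm1).
- by move: hm; rewrite /mt (negbTE nm2).
Qed.

Lemma comm_step u v : comm_move u v -> validN u ->
  [/\ validN v, prodN u = prodN v, size u = size v & forall p : {perm 'I_n}, PR mt (invs p u) (invs p v)].
Proof. case=> X [Y [i [j [hij [-> ->]]]]]; exact: comm_core. Qed.

End M.



Notation crt := (clos_refl_trans _).

Lemma crt_sym (A : Type) (R : relation A) : (forall x y, R x y -> R y x) ->
  forall x y, crt R x y -> crt R y x.
Proof.
move=> hs x y; elim => {x y} [x y h|x|x y z _ h1 _ h2].
- by apply: rt_step; apply: hs.
- exact: rt_refl.
- exact: rt_trans h2 h1.
Qed.

Lemma rst_crt (A : Type) (R : relation A) : (forall x y, R x y -> R y x) ->
  forall x y, clos_refl_sym_trans _ R x y -> crt R x y.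
Proof.
move=> hs x y; elim => {x y} [x y h|x|x y _ h|x y z _ h1 _ h2].
- exact: rt_step.
- exact: rt_refl.
- exact: crt_sym.
- exact: rt_trans h1 h2.
Qed.

Lemma braid_sym u v : braid_move u v -> braid_move v u.
Proof. by case=> X [Y [i [h|h]]]; exists X, Y, i; [right|left]; case: h => -> ->. Qed.
Lemma comm_sym u v : comm_move u v -> comm_move v u.
Proof. case=> X [Y [i [j [h [-> ->]]]]]; exists X, Y, j, i; split => //; lia. Qed.

Definition mv u v := braid_move u v \/ comm_move u v.
Lemma mv_sym u v : mv u v -> mv v u.
Proof. by case=> h; [left; apply: braid_sym | right; apply: comm_sym]. Qed.

Lemma mv_rcons x y a : mv x y -> mv (rcons x a) (rcons y a).
Proof.
case=> [[X [Y [i h]]]|[X [Y [i [j [hij [-> ->]]]]]]].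
- left; exists X, (rcons Y a), i.
  by case: h => -[-> ->]; [left|right]; rewrite !rcons_cat.
- right; exists X, (rcons Y a), i, j; split => //; by rewrite !rcons_cat.
Qed.

Lemma crt_rcons x y a : crt mv x y -> crt mv (rcons x a) (rcons y a).
Proof.
elim => {x y} [x y h|x|x y z _ h1 _ h2].
- by apply: rt_step; apply: mv_rcons.
- exact: rt_refl.
- exact: rt_trans h1 h2.
Qed.

Section M.
Variable n : nat.
Local Open Scope group_scope.
Local Notation sN := (sN n).
Local Notation prodN := (prodN n).
Local Notation validN := (validN n).

Lemma braid_chain u v : crt braid_move u v -> validN u ->
  [/\ validN v, prodN u = prodN v, size u = size v &
      forall p : {perm 'I_n}, PR nm (invs p u) (invs p v)].
Proof.
elim => {u v} [x y h|x|x y z _ IH1 _ IH2] hv.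
- exact: braid_step.
- by split => // p; exact: PR_refl.
- have [a1 a2 a3 a4] := IH1 hv; have [b1 b2 b3 b4] := IH2 a1.
  split => //; [congruence | congruence | move=> p; exact: PR_trans (a4 p) (b4 p)].
Qed.

Lemma comm_chain u v : crt comm_move u v -> validN u ->
  [/\ validN v, prodN u = prodN v, size u = size v &
      forall p : {perm 'I_n}, PR mt (invs p u) (invs p v)].
Proof.
elim => {u v} [x y h|x|x y z _ IH1 _ IH2] hv.
- exact: comm_step.
- by split => // p; exact: PR_refl.
- have [a1 a2 a3 a4] := IH1 hv; have [b1 b2 b3 b4] := IH2 a1.
  split => //; [congruence | congruence | move=> p; exact: PR_trans (a4 p) (b4 p)].
Qed.

Lemma mv_chain u v : crt mv u v -> validN u ->
  [/\ validN v, prodN u = prodN v & size u = size v].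
Proof.
elim => {u v} [x y [h|h]|x|x y z _ IH1 _ IH2] hv.
- by case: (braid_step h hv).
- by case: (comm_step h hv).
- by [].
- have [a1 a2 a3] := IH1 hv; have [b1 b2 b3] := IH2 a1.
  split => //; congruence.
Qed.

Definition rw (w : {perm 'I_n}) u := [/\ validN u, prodN u = w & size u = L w].

Lemma mulsK (p : {perm 'I_n}) a : p * sN a * sN a = p.
Proof. by rewrite -mulgA sNK mulg1. Qed.

Lemma last_desc w u a : rw w (rcons u a) ->
  [/\ 0 < a < n, rw (w * sN a) u, L (w * sN a) < L w & qv w a < qv w a.-1].
Proof.
case; rewrite /validN all_rcons => /andP[ha hu] hp hs.
rewrite size_rcons in hs.
have e : w * sN a = prodN u by rewrite -hp prodN_rcons mulsK.
have h1 := L_word 1 hu; rewrite mul1g L1 /= in h1.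
have [h2 _] := L_step (prodN u) ha; rewrite -prodN_rcons hp in h2.
have eL : L (w * sN a) = size u by rewrite e; lia.
have a0 : 0 < a by case/andP: ha.
split => //; first lia.
case: (ltngtP (qv w a) (qv w a.-1)) => // h.
- by have := L_up ha h; lia.
- by case: (qv_neq a0 (esym h)).
Qed.

Lemma rw_rcons w u a : 0 < a < n -> rw (w * sN a) u -> qv w a < qv w a.-1 -> rw w (rcons u a).
Proof.
move=> ha [hu hp hs] hd; split.
- by rewrite /validN all_rcons ha.
- by rewrite prodN_rcons hp mulsK.
- by rewrite size_rcons hs; have := L_down ha hd.
Qed.

Lemma rw_exists w : exists r, rw w r.
Proof. by have [r [h1 h2 h3]] := exists_word w; exists r. Qed.

Section Step.
Variable k : nat.
Hypothesis IH : forall w, L w < k -> forall u v, rw w u -> rw w v -> crt mv u v.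

Lemma conn_via w u a r : L w <= k -> rw w (rcons u a) -> rw (w * sN a) r ->
  crt mv (rcons u a) (rcons r a).
Proof.
move=> hk hu hr; have [ha hu' hL hd] := last_desc hu.
apply: crt_rcons; apply: (IH _ hu' hr); lia.
Qed.

Lemma comm_case w u v a b : L w <= k -> (a.+1 < b) \/ (b.+1 < a) ->
  rw w (rcons u a) -> rw w (rcons v b) -> crt mv (rcons u a) (rcons v b).
Proof.
move=> hk hab hu hv.
have [ha _ _ hda] := last_desc hu; have [hb _ _ hdb] := last_desc hv.
have an : a < n by case/andP: ha.
have bn : b < n by case/andP: hb.
have ec : w * sN a * sN b = w * sN b * sN a.
  rewrite -!mulgA; congr (_ * _); case: hab => h; [exact: sN_comm | exact/esym/sN_comm].
have [r hr] := rw_exists (w * sN a * sN b).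
have d1 : qv (w * sN a) b < qv (w * sN a) b.-1.
  rewrite !qv_sN //; have -> : sw a b = b by swt. by have -> : sw a b.-1 = b.-1 by swt.
have d2 : qv (w * sN b) a < qv (w * sN b) a.-1.
  rewrite !qv_sN //; have -> : sw b a = a by swt. by have -> : sw b a.-1 = a.-1 by swt.
have r1 : rw (w * sN a) (rcons r b) by apply: rw_rcons.
have r2 : rw (w * sN b) (rcons r a) by apply: rw_rcons; rewrite -?ec.
apply: rt_trans (conn_via hk hu r1) _.
apply: rt_trans _ (crt_sym mv_sym (conn_via hk hv r2)).
apply: rt_step; right; exists r, [::], b, a; split; first lia.
by rewrite -!cats1 -!catA.
Qed.

Lemma braid_case w u v a : L w <= k ->
  rw w (rcons u a) -> rw w (rcons v a.+1) -> crt mv (rcons u a) (rcons v a.+1).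
Proof.
move=> hk hu hv.
have [ha _ _ hda] := last_desc hu; have [hb _ _ hdb] := last_desc hv.
have a0 : 0 < a by case/andP: ha.
have an : a < n by case/andP: ha.
have bn : a.+1 < n by case/andP: hb.
have e1 : sw a a = a.-1 by swt.
have e2 : sw a a.+1 = a.+1 by swt.
have e3 : sw a.+1 a.-1 = a.-1 by swt.
have e4 : sw a a.-1 = a by swt.
have e5 : sw a.+1 a = a.+1 by swt.
have e6 : sw a.+1 a.+1 = a by swt.
have hdb' : qv w a.+1 < qv w a by [].
have eb : w * sN a * sN a.+1 * sN a = w * sN a.+1 * sN a * sN a.+1.
  by have := congr1 (fun q => w * q) (sN_braid a0 bn); rewrite !mulgA.
have [r hr] := rw_exists (w * sN a * sN a.+1 * sN a).
have d_u1 : qv (w * sN a * sN a.+1) a < qv (w * sN a * sN a.+1) a.-1.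
  rewrite !qv_sN //; do 2 rewrite ?e1 ?e2 ?e3 ?e4 ?e5 ?e6; exact: hdb'.
have ru1 : rw (w * sN a * sN a.+1) (rcons r a) by apply: rw_rcons.
have d_u2 : qv (w * sN a) a.+1 < qv (w * sN a) a.
  rewrite !qv_sN //; do 2 rewrite ?e1 ?e2 ?e3 ?e4 ?e5 ?e6; lia.
have ru2 : rw (w * sN a) (rcons (rcons r a) a.+1) by apply: rw_rcons.
have cu := conn_via hk hu ru2.
have rv0 : rw (w * sN a.+1 * sN a * sN a.+1) r by rewrite -eb.
have d_v1 : qv (w * sN a.+1 * sN a) a.+1 < qv (w * sN a.+1 * sN a) a.
  rewrite !qv_sN //; do 2 rewrite ?e1 ?e2 ?e3 ?e4 ?e5 ?e6; lia.
have rv1 : rw (w * sN a.+1 * sN a) (rcons r a.+1) by apply: rw_rcons.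
have d_v2 : qv (w * sN a.+1) a < qv (w * sN a.+1) a.-1.
  rewrite !qv_sN //; do 2 rewrite ?e1 ?e2 ?e3 ?e4 ?e5 ?e6; lia.
have rv2 : rw (w * sN a.+1) (rcons (rcons r a.+1) a) by apply: rw_rcons.
have cv := conn_via hk hv rv2.
apply: rt_trans cu _.
apply: rt_trans _ (crt_sym mv_sym cv).
apply: rt_step; left; exists r, [::], a; left.
by split; rewrite -!cats1 -!catA.
Qed.

Lemma matsumoto_step w u v : L w <= k -> rw w u -> rw w v -> crt mv u v.
Proof.
move=> hk; case/lastP: u => [|u a] hu; case/lastP: v => [|v b] hv.
- exact: rt_refl.
- by case: hu hv => _ _ h0 [_ _]; rewrite size_rcons -h0.
- by case: hu hv => _ _ h0 [_ _ h1]; move: h0; rewrite -h1 size_rcons.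
case: (ltngtP a b) => hab.
- case: (ltnP a.+1 b) => h2.
  + exact: (comm_case hk (or_introl h2) hu hv).
  + have eb : b = a.+1 by lia.
    subst b; exact: (braid_case hk hu hv).
- case: (ltnP b.+1 a) => h2.
  + exact: (comm_case hk (or_intror h2) hu hv).
  + have ea : a = b.+1 by lia.
    subst a; apply: crt_sym; first exact: mv_sym.
    exact: (braid_case hk hv hu).
- subst b.
  have [ha hu' hL hd] := last_desc hu; have [_ hv' _ _] := last_desc hv.
  apply: crt_rcons; apply: (IH _ hu' hv'); lia.
Qed.
End Step.

Theorem matsumoto w u v : rw w u -> rw w v -> crt mv u v.
Proof.
have [k] := ubnP (L w); elim: k w u v => // k IH w u v hk.
have IH' : forall w', L w' < k -> forall u v, rw w' u -> rw w' v -> crt mv u v.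
  by move=> w' hw' u' v'; exact: IH.
have hk' : L w <= k by lia.
move=> hu hv; exact: (matsumoto_step IH' hk' hu hv).
Qed.
End M.


Lemma pboolP (P : Prop) : pbool P = true <-> P.
Proof. by rewrite /pbool; case: excluded_middle_informative. Qed.
Lemma pbool_iff (P Q : Prop) : (P <-> Q) -> pbool P = pbool Q.
Proof. rewrite /pbool => h; case: (excluded_middle_informative P) => hp; case: (excluded_middle_informative Q) => hq //; exfalso; tauto. Qed.

Lemma invs_inj n (p : {perm 'I_n}) u v : validN n u -> validN n v -> invs p u = invs p v -> u = v.
Proof.
elim: u p v => [|a u IH] p [|b v] //= /andP[ha hu] /andP[hb hv] [_ /qv_inj eab].
by subst b => /IH ->.
Qed.

Lemma exists_tuple n k (s : seq nat) : size s = k -> all (fun i => i < n) s ->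
  exists t : k.-tuple 'I_n, map val t = s.
Proof.
elim: s k => [|a s IH] [|k] //=.
  by move=> _ _; exists [tuple]. 
case=> hk /andP[ha hs]; have [t ht] := IH k hk hs.
by exists [tuple of Ordinal ha :: t]; rewrite /= ht.
Qed.

Lemma validN_all n s : validN n s -> all (fun i => i < n) s.
Proof. by move=> h; apply/allP => x /(validN_mem h) /andP[]. Qed.

Section Main.
Variable n : nat.
Local Open Scope group_scope.

Lemma sN_val (o : 'I_n) : sN n (val o) = adj_tr o.
Proof. by rewrite /sN valK. Qed.

Lemma word_prodE (t : seq 'I_n) : word_prod t = prodN n (map val t).
Proof. by rewrite /word_prod /prodN big_map; apply: eq_bigr => o _; rewrite sN_val. Qed.

Lemma valid_wordE (t : seq 'I_n) : valid_word t = validN n (map val t).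
Proof. by elim: t => //= a t IH; rewrite IH ltn_ord andbT. Qed.

Lemma perm_lengthE (w : {perm 'I_n}) : perm_length w = L w.
Proof.
have hw : has_word_of_length w (L w).
  have [r [h1 h2 h3]] := rw_exists w.
  have [t ht] := exists_tuple h3 (validN_all h1).
  apply/existsP; exists t; rewrite valid_wordE word_prodE ht h1 h2 eqxx //.
rewrite /perm_length; case: excluded_middle_informative => [h|h]; last first.
  by exfalso; apply: h; exists (L w).
case: ex_minnP => m hm hmin.
have := hmin _ hw; move: hm => /existsP[t /andP[hv /eqP hp]].
rewrite valid_wordE in hv; rewrite word_prodE in hp.
have := L_word 1 hv; rewrite mul1g L1 hp size_map size_tuple /=; lia.
Qed.
End Main.

Lemma crossing (Q : pred (seq nat)) a b : crt mv a b -> Q a -> ~~ Q b ->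
  exists c d, [/\ crt mv a c, Q c, ~~ Q d & mv c d].
Proof.
move=> h; move: (clos_rt_rt1n _ _ _ _ h); clear h.
elim => {a b} [a0 -> //|a0 a1 b0 hm _ IH] qa qb.
case q1: (Q a1).
- have [c [d [h1 h2 h3 h4]]] := IH q1 qb.
  by exists c, d; split => //; apply: rt_trans h1; apply: rt_step.
- by exists a0, a1; split => //; [exact: rt_refl | rewrite q1].
Qed.

Lemma arith1 a b (z : bool) k : a + b <= k.+2 -> 0 + a + (z + b) <= k.+3.
Proof. case: z => /=; lia. Qed.
Lemma arith2 a b (z : bool) k : a + b <= k.+2 -> (z + a) + (0 + b) <= k.+3.
Proof. case: z => /=; lia. Qed.
Lemma arith3 p q r : p + q <= r.+1 -> p + q - 1 <= r.
Proof. lia. Qed.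

Section Thm.
Variable n : nat.
Variable w : {perm 'I_n}.
Local Notation T := ((perm_length w).-tuple 'I_n).
Local Notation R := (reduced_words w).

Definition cls (m : seq nat -> seq nat -> Prop) (x : T) : {set T} :=
  [set u in R | pbool (clos_refl_sym_trans _ m (map val x) (map val u))].

Lemma inR (x : T) : (x \in R) <-> rw w (map val x).
Proof.
rewrite inE valid_wordE word_prodE; split.
- by case/andP=> hv /eqP hp; split => //; rewrite size_map size_tuple perm_lengthE.
- by case=> hv hp _; rewrite hv hp eqxx.
Qed.

Lemma tupleR (d : seq nat) : rw w d -> exists2 y : T, y \in R & map val y = d.
Proof.
case=> hv hp hs; rewrite -perm_lengthE in hs.
have [t ht] := exists_tuple hs (validN_all hv).
by exists t => //; apply/inR; rewrite ht; split => //; rewrite hs perm_lengthE.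
Qed.

Lemma cls_mem m (x : T) : x \in R -> x \in cls m x.
Proof. by move=> hx; rewrite inE hx; apply/pboolP; exact: rst_refl. Qed.

Lemma cls_eq m (x y : T) : y \in R -> cls m x = cls m y ->
  clos_refl_sym_trans _ m (map val x) (map val y).
Proof. by move=> hy e; have := cls_mem m hy; rewrite -e inE => /andP[_ /pboolP]. Qed.

Lemma cls_step m (x y : T) : m (map val x) (map val y) -> cls m x = cls m y.
Proof.
move=> h; apply/setP => u; rewrite !inE; congr (_ && _); apply: pbool_iff; split => h'.
- by eapply rst_trans; [apply: rst_sym; apply: rst_step; exact: h | exact: h'].
- by eapply rst_trans; [apply: rst_step; exact: h | exact: h'].
Qed.

Lemma cls_inj (x y : T) : x \in R -> y \in R ->
  cls braid_move x = cls braid_move y -> cls comm_move x = cls comm_move y -> x = y.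
Proof.
move=> hx hy e1 e2.
have hb := rst_crt braid_sym (cls_eq hy e1).
have hc := rst_crt comm_sym (cls_eq hy e2).
have [hvx hpx hsx] := proj1 (inR x) hx.
have [hvy hpy hsy] := proj1 (inR y) hy.
have [_ _ _ PB] := braid_chain hb hvx.
have [_ _ _ PC] := comm_chain hc hvx.
have ux : uniq (invs (1%g : {perm 'I_n}) (map val x)).
  have hL : L (1 * prodN n (map val x))%g = L (1%g : {perm 'I_n}) + size (map val x).
    by rewrite mul1g L1 hpx hsx.
  by case/andP: (invs_uniq hvx hL).
have uy : uniq (invs (1%g : {perm 'I_n}) (map val y)).
  have hL : L (1 * prodN n (map val y))%g = L (1%g : {perm 'I_n}) + size (map val y).
    by rewrite mul1g L1 hpy hsy.
  by case/andP: (invs_uniq hvy hL).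
have e : invs (1%g : {perm 'I_n}) (map val x) = invs (1%g : {perm 'I_n}) (map val y).
  apply: eq_from_before => //; first by case: (PB (1%g : {perm 'I_n})) => hp _; exact: perm_mem hp.
  move=> al be; case hm: (meet al be); first by case: (PC (1%g : {perm 'I_n})) => _ h; apply: h.
  by case: (PB (1%g : {perm 'I_n})) => _ h; apply: h; rewrite /nm hm.
have := invs_inj hvx hvy e => /(inj_map val_inj) ev.
exact: val_inj.
Qed.

Lemma upper : #|R| <= (#|cls braid_move @: R| * #|cls comm_move @: R|)%N.
Proof.
have inj : {in R &, injective (fun x => (cls braid_move x, cls comm_move x))}.
  by move=> x y hx hy [e1 e2]; exact: cls_inj.
rewrite -(card_in_imset inj) -cardsX; apply: subset_leq_card.
by apply/subsetP => z /imsetP[x hx ->]; rewrite in_setX !imset_f.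
Qed.

Definition F (S : {set T}) := (#|cls braid_move @: S| + #|cls comm_move @: S|)%N.

Lemma bfs k : 0 < k <= #|R| -> exists2 S : {set T}, S \subset R & (#|S| = k /\ F S <= k.+1).
Proof.
elim: k => [//|k IH] /andP[_ hk].
case: k IH hk => [_ hk | k IH hk].
  case/card_gt0P: hk => x hx.
  exists [set x]; first by rewrite sub1set.
  by rewrite cards1 /F !imset_set1 !cards1.
have [S hS [hc hF]] := IH ltac:(apply/andP; split; [done | lia]).
have : ~~ (R \subset S) by apply/negP => /subset_leq_card; lia.
case/subsetPn => y hy hyS.
have : 0 < #|S| by lia.
case/card_gt0P => x0 hx0.
have hx0R := subsetP hS _ hx0.
have ch := matsumoto (proj1 (inR x0) hx0R) (proj1 (inR y) hy).
pose Q := fun s : seq nat => [exists t in S, map val t == s].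
have q0 : Q (map val x0) by apply/existsP; exists x0; rewrite hx0 eqxx.
have q1 : ~~ Q (map val y).
  apply/negP => /existsP[t /andP[ht /eqP /(inj_map val_inj) e]].
  by move: hyS; rewrite -(val_inj e) ht.
have [c [d [h1 h2 h3 h4]]] := crossing ch q0 q1.
case/existsP: h2 => t1 /andP[ht1 /eqP et1].
have [hvx0 hpx0 hsx0] := proj1 (inR x0) hx0R.
have [hvd hpd hsd] := mv_chain (rt_trans _ _ _ _ _ h1 (rt_step _ _ _ _ h4)) hvx0.
have [y1 hy1 ey1] : exists2 y1 : T, y1 \in R & map val y1 = d.
  by apply: tupleR; split => //; [rewrite -hpd | rewrite -hsd].
have hy1S : y1 \notin S.
  apply/negP => hin; move/negP: h3; apply; apply/existsP; exists y1.
  by rewrite hin ey1 eqxx.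
exists (y1 |: S); first by rewrite subUset sub1set hy1 hS.
split; first by rewrite cardsU1 hy1S hc.
have ht1b : cls braid_move t1 \in cls braid_move @: S by apply: imset_f.
have ht1c : cls comm_move t1 \in cls comm_move @: S by apply: imset_f.
rewrite -et1 -ey1 in h4.
rewrite /F !imsetU1 !cardsU1.
move: hF; rewrite /F.
case: h4 => h4.
- rewrite -(cls_step h4) ht1b /=; exact: arith1.
- rewrite -(cls_step h4) ht1c /=; exact: arith2.
Qed.

Lemma lower : (#|cls braid_move @: R| + #|cls comm_move @: R| - 1 <= #|R|)%N.
Proof.
case: (posnP #|R|) => h0.
  move/eqP: h0; rewrite cards_eq0 => /eqP ->; by rewrite !imset0 !cards0.
have [S hS [hc hF]] := @bfs #|R| ltac:(by rewrite h0 leqnn).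
have eS : S = R by apply/eqP; rewrite eqEcard hS hc leqnn.
move: hF; rewrite eS /F; exact: arith3.
Qed.
End Thm.

Theorem theorem4p6 (n : nat) (w : {perm 'I_n}) :
  #|braid_classes w| + #|comm_classes w| - 1 <= #|reduced_words w|
  <= #|braid_classes w| * #|comm_classes w|.
Proof.
apply/andP; split.
- exact: lower.
- exact: upper.
Qed.
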